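(* Let $G$ be a discrete group and $X$ a minimal $G$-flow, and suppose there is an infinite subgroup $H\le G$ such that the restricted action $H\curvearrowright X$ is equicontinuous. Then $X$ has the separated covering property.
   Context: A $G$-flow is a compact Hausdorff space with an action of $G$ by homeomorphisms; it is minimal if every orbit is dense. An action $H\curvearrowright X$ is equicontinuous if for every neighborhood $U$ of the diagonal in $X\times X$ there is a neighborhood $V$ of the diagonal such that $(x,y)\in V$ implies $(hx,hy)\in U$ for all $h\in H$. For finite $D\subseteq G$, a set $S\subseteq G$ is $D$-separated if $Dg\cap Dh=\emptyset$ for distinct $g,h\in S$. A minimal $G$-flow has the separated covering property if for every finite $D\subseteq G$ and non-empty open $U$ there is a $D$-separated $S\subseteq G$ with $S^{-1}U=X$. *)

(* Defs.v *)
From Stdlib Require Import List.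
Import ListNotations.
Set Implicit Arguments.

Record Group := {
  gcar :> Type;
  gmul : gcar -> gcar -> gcar;
  gone : gcar;
  ginv : gcar -> gcar;
  gmulA : forall a b c, gmul a (gmul b c) = gmul (gmul a b) c;
  gmul1l : forall a, gmul gone a = a;
  gmul1r : forall a, gmul a gone = a;
  gmulVl : forall a, gmul (ginv a) a = gone;
  gmulVr : forall a, gmul a (ginv a) = gone
}.

Definition is_subgroup (G : Group) (H : G -> Prop) : Prop :=
  H (gone G) /\ (forall a b, H a -> H b -> H (gmul G a b)) /\
  (forall a, H a -> H (ginv G a)).

Definition infinite_set (T : Type) (H : T -> Prop) : Prop :=
  forall l : list T, exists h, H h /\ ~ In h l.

Record Topology (X : Type) := {
  is_open : (X -> Prop) -> Prop;
  open_full : is_open (fun _ => True);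
  open_union : forall (I : Type) (F : I -> X -> Prop),
      (forall i, is_open (F i)) -> is_open (fun x => exists i, F i x);
  open_inter : forall U V, is_open U -> is_open V ->
      is_open (fun x => U x /\ V x)
}.

Definition compact (X : Type) (t : Topology X) : Prop :=
  forall (I : Type) (F : I -> X -> Prop),
    (forall i, is_open t (F i)) -> (forall x, exists i, F i x) ->
    exists l : list I, forall x, exists i, In i l /\ F i x.

Definition hausdorff (X : Type) (t : Topology X) : Prop :=
  forall x y : X, x <> y -> exists U V,
    is_open t U /\ is_open t V /\ U x /\ V y /\ (forall z, ~ (U z /\ V z)).

Definition continuous (X : Type) (t : Topology X) (f : X -> X) : Prop :=
  forall U, is_open t U -> is_open t (fun x => U (f x)).

Definition prod_open (X : Type) (t : Topology X) (W : X -> X -> Prop) : Prop :=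
  forall x y, W x y -> exists A B, is_open t A /\ is_open t B /\ A x /\ B y /\
    (forall a b, A a -> B b -> W a b).

Definition diag_nbhd (X : Type) (t : Topology X) (U : X -> X -> Prop) : Prop :=
  exists W, prod_open t W /\ (forall x, W x x) /\ (forall x y, W x y -> U x y).

(* A G-flow: compact Hausdorff space with an action by homeomorphisms
   (each act g is continuous, with continuous inverse act g^-1). *)
Definition is_flow (G : Group) (X : Type) (t : Topology X) (act : G -> X -> X)
  : Prop :=
  compact t /\ hausdorff t /\
  (forall x, act (gone G) x = x) /\
  (forall g h x, act (gmul G g h) x = act g (act h x)) /\
  (forall g, continuous t (act g)).

Definition minimal_flow (G : Group) (X : Type) (t : Topology X)
  (act : G -> X -> X) : Prop :=
  forall (x : X) (U : X -> Prop), is_open t U -> (exists y, U y) ->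
    exists g, U (act g x).

Definition equicontinuous_on (G : Group) (X : Type) (t : Topology X)
  (act : G -> X -> X) (H : G -> Prop) : Prop :=
  forall U, diag_nbhd t U -> exists V, diag_nbhd t V /\
    forall x y, V x y -> forall h, H h -> U (act h x) (act h y).

Definition separated (G : Group) (D : list G) (S : G -> Prop) : Prop :=
  forall g h, S g -> S h -> g <> h ->
    forall d1 d2, In d1 D -> In d2 D -> gmul G d1 g <> gmul G d2 h.

(* separated covering property; S^{-1} U = X means every x lies in
   s^{-1} U for some s in S, i.e. act s x \in U *)
Definition separated_covering (G : Group) (X : Type) (t : Topology X)
  (act : G -> X -> X) : Prop :=
  forall (D : list G) (U : X -> Prop), is_open t U -> (exists y, U y) ->
    exists S : G -> Prop, @separated G D S /\
      forall x, exists s, S s /\ U (act s x).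

Arguments is_flow {G X} t act.
Arguments minimal_flow {G X} t act.
Arguments equicontinuous_on {G X} t act H.
Arguments separated_covering {G X} t act.
Arguments is_subgroup {G} H.
Arguments separated {G} D S.

(* Main.v *)
Require Import Defs.
From Stdlib Require Import List Classical.
Import ListNotations.

Lemma ginv_inv (G : Group) (a : G) : ginv G (ginv G a) = a.
Proof.
  rewrite <- (gmul1r G (ginv G (ginv G a))).
  rewrite <- (gmulVl G a), gmulA, gmulVl, gmul1l. reflexivity.
Qed.

Lemma cancel_l (G : Group) (a b : G) : gmul G a (gmul G (ginv G a) b) = b.
Proof. rewrite gmulA, gmulVr, gmul1l; reflexivity. Qed.

Lemma solve_l (G : Group) (d1 d2 s h : G) :
  gmul G d1 s = gmul G d2 h -> s = gmul G (ginv G d1) (gmul G d2 h).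
Proof.
  intro E. rewrite <- E, gmulA, gmulVl, gmul1l. reflexivity.
Qed.

Lemma Wopen (X : Type) (t : Topology X) (Hh : hausdorff t) (U : X -> Prop) (y : X) :
  is_open t U -> U y ->
  diag_nbhd t (fun a b => (U a /\ U b) \/ (a <> y /\ b <> y)).
Proof.
  intros HU Uy. exists (fun a b => (U a /\ U b) \/ (a <> y /\ b <> y)).
  split; [|split; [|auto]].
  - intros a b [[Ua Ub]|[Na Nb]].
    + exists U, U; repeat split; auto.
    + destruct (Hh a y Na) as [A1 [V1 [HA1 [HV1 [A1a [V1y D1]]]]]].
      destruct (Hh b y Nb) as [B1 [V2 [HB1 [HV2 [B1b [V2y D2]]]]]].
      exists A1, B1; repeat split; auto.
      intros a' b' Aa Bb. right. split; intro E; subst.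
      * apply (D1 y); auto.
      * apply (D2 y); auto.
  - intro x. destruct (classic (U x)) as [Ux|Nx]; [left; auto|right].
    split; intro E; subst; auto.
Qed.

Lemma return_inf (G : Group) (X : Type) (t : Topology X) (act : G -> X -> X)
  (Hc : compact t) (Hh : hausdorff t)
  (Hact1 : forall x, act (gone G) x = x)
  (HactM : forall g h x, act (gmul G g h) x = act g (act h x))
  (H : G -> Prop) (Hsub : is_subgroup H) (Hinf : infinite_set H)
  (Heq : equicontinuous_on t act H) (y : X) (A : X -> Prop)
  (HA : is_open t A) (Ay : A y) :
  forall L, exists k, H k /\ ~ In k L /\ A (act k y).
Proof.
  destruct Hsub as [H1 [HM HV]].
  intros L. apply NNPP; intro Hno.
  assert (HL : forall k, H k -> A (act k y) -> In k L).
  { intros k Hk Hak; apply NNPP; intro; apply Hno; eauto. }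
  destruct (Heq _ (@Wopen X t Hh A y HA Ay)) as [E [[W' [Wpo [Wd WE]]] HE]].
  set (I := {C : X -> Prop | is_open t C /\ forall a b, C a -> C b -> E a b}).
  destruct (Hc I (fun i => proj1_sig i)) as [cs Hcs].
  - intro i; exact (proj1 (proj2_sig i)).
  - intro x. destruct (Wpo x x (Wd x)) as [A1 [B1 [HA1 [HB1 [A1x [B1x Hab]]]]]].
    exists (exist (fun C => is_open t C /\ forall a b, C a -> C b -> E a b)
      (fun z => A1 z /\ B1 z)
      (conj (open_inter t _ _ HA1 HB1)
        (fun a b Ha Hb => WE _ _ (Hab a b (proj1 Ha) (proj2 Hb))))).
    simpl; auto.
  - assert (HMl : forall cs : list I, exists M, forall c, In c cs ->
        forall h, H h -> proj1_sig c (act h y) -> In h M).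
    { induction cs0 as [|c cs0 IH].
      - exists nil; intros c [].
      - destruct IH as [M' HM'].
        destruct (classic (exists h0, H h0 /\ proj1_sig c (act h0 y)))
          as [[h0 [Hh0 Ch0]]|Hn].
        + exists (map (gmul G h0) L ++ M'). intros c' [<-|Hin] h Hh' Ch.
          * apply in_or_app; left.
            assert (Hk : In (gmul G (ginv G h0) h) L).
            { apply HL. apply HM; auto.
              pose proof (proj2 (proj2_sig c) _ _ Ch0 Ch) as Eh.
              pose proof (HE _ _ Eh (ginv G h0) (HV _ Hh0)) as Hw.
              rewrite <- !HactM in Hw. rewrite gmulVl, Hact1 in Hw.
              destruct Hw as [[_ Hw]|[Hw _]]; auto. congruence. }
            rewrite <- (cancel_l G h0 h). apply in_map; auto.
          * apply in_or_app; right. eapply HM'; eauto.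
        + exists M'. intros c' [<-|Hin] h Hh' Ch.
          * exfalso; apply Hn; eauto.
          * eapply HM'; eauto. }
    destruct (HMl cs) as [M HMM]. destruct (Hinf M) as [h [Hh' Hnot]].
    destruct (Hcs (act h y)) as [c [Hc' Cc]]. apply Hnot; eapply HMM; eauto.
Qed.

Theorem lemma3p1 (G : Group) (X : Type) (t : Topology X) (act : G -> X -> X)
  (Hflow : is_flow t act) (Hmin : minimal_flow t act)
  (H : G -> Prop) (Hsub : is_subgroup H) (Hinf : infinite_set H)
  (Heq : equicontinuous_on t act H) :
  separated_covering t act.
Proof.
  destruct Hflow as [Hc [Hh [Hact1 [HactM Hcont]]]].
  pose proof Hsub as [H1 [HM HV]].
  intros D U HU [y Uy].
  assert (Hkey : exists B, is_open t B /\ B y /\ forall L, exists h, H h /\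
      ~ In h L /\ forall b, B b -> U (act h b)).
  { destruct (Heq _ (@Wopen X t Hh U y HU Uy)) as [E [[W' [Wpo [Wd WE]]] HE]].
    destruct (Wpo y y (Wd y)) as [A1 [B1 [HA1 [HB1 [A1y [B1y Hab]]]]]].
    exists B1; split; auto; split; auto. intro L.
    destruct (@return_inf G X t act Hc Hh Hact1 HactM H Hsub Hinf Heq y A1 HA1 A1y (map (ginv G) L))
      as [k [Hk [Hn Ak]]].
    exists (ginv G k). split; [apply HV; auto|split].
    - intro Hin. apply Hn. rewrite <- (ginv_inv G k). apply in_map; auto.
    - intros b Bb. pose proof (WE _ _ (Hab _ _ Ak Bb)) as Ek.
      pose proof (HE _ _ Ek (ginv G k) (HV _ Hk)) as Hw.
      rewrite <- HactM, gmulVl, Hact1 in Hw.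
      destruct Hw as [[_ Hw]|[Hw _]]; auto. congruence. }
  destruct Hkey as [B [HB [By Hkey]]].
  destruct (Hc G (fun g x => B (act g x))) as [Fl HFl].
  { intro g; apply (Hcont g B HB). }
  { intro x; destruct (Hmin x B HB (ex_intro _ y By)) as [g Hg]; eauto. }
  assert (Hcons : forall Fl : list G, exists Sl, separated D (fun s => In s Sl) /\
      forall g, In g Fl -> exists s, In s Sl /\ forall x, B (act g x) -> U (act s x)).
  { induction Fl0 as [|f Fl0 IH].
    - exists nil; split; [intros g h []|intros g []].
    - destruct IH as [Sl [Hsep Hcov]].
      set (Lf := flat_map (fun s' => flat_map (fun d1 =>
                   map (fun d2 => gmul G (ginv G d1) (gmul G d2 s')) D) D) Sl).
      assert (inLf : forall s' d1 d2, In s' Sl -> In d1 D -> In d2 D ->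
                 In (gmul G (ginv G d1) (gmul G d2 s')) Lf).
      { intros s' d1 d2 I1 I2 I3. apply in_flat_map; exists s'; split; auto.
        apply in_flat_map; exists d1; split; auto.
        apply (in_map (fun d2 => gmul G (ginv G d1) (gmul G d2 s'))); auto. }
      destruct (Hkey (map (fun l => gmul G l (ginv G f)) Lf)) as [h [Hh' [Hn Hhu]]].
      assert (Hs : ~ In (gmul G h f) Lf).
      { intro Hin; apply Hn.
        replace h with (gmul G (gmul G h f) (ginv G f))
          by (rewrite <- gmulA, gmulVr, gmul1r; reflexivity).
        apply (in_map (fun l => gmul G l (ginv G f))); auto. }
      exists (gmul G h f :: Sl). split.
      + intros g1 g2 [<-|I1] [<-|I2] Hne d1 d2 Hd1 Hd2 Heqd.
        * apply Hne; reflexivity.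
        * apply Hs. rewrite (solve_l G _ _ _ _ Heqd). apply inLf; auto.
        * apply Hs. symmetry in Heqd. rewrite (solve_l G _ _ _ _ Heqd). apply inLf; auto.
        * exact (Hsep _ _ I1 I2 Hne d1 d2 Hd1 Hd2 Heqd).
      + intros g [<-|Hin].
        * exists (gmul G h f); split; [left; reflexivity|].
          intros x Bx; rewrite HactM; apply Hhu; auto.
        * destruct (Hcov g Hin) as [s [Hs' Hsx]]; exists s; split; [right|]; auto. }
  destruct (Hcons Fl) as [Sl [Hsep Hcov]].
  exists (fun s => In s Sl). split; auto.
  intro x. destruct (HFl x) as [g [Hg Bg]].
  destruct (Hcov g Hg) as [s [Hs Hsx]]. exists s; auto.
Qed.
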